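(* There exists a point $x\in\{0,1,2\}^{\mathbb{N}}$ such that, for the full shift $(\{0,1,2\}^{\mathbb{N}},S)$, $V(x)\cap V^{\log}(x)=\emptyset$.
   Context: $S$ is the left shift. For $N\ge1$ let $\mathrm{Emp}(x,N)=\frac1N\sum_{n=1}^N\delta_{S^{n-1}(x)}$, and for $N\ge2$ let $\mathrm{Emp}^{\log}(x,N)=\frac1{\log N}\sum_{n=1}^N\frac1n\delta_{S^{n-1}(x)}$. $V(x)$ (resp. $V^{\log}(x)$) is the set of Borel probability measures $\nu$ such that $\mathrm{Emp}(x,N_k)\to\nu$ (resp. $\mathrm{Emp}^{\log}(x,N_k)\to\nu$) weak-$*$ for some increasing sequence $(N_k)$. *)

(* Defs.v *)
From HB Require Import structures.
From mathcomp Require Import all_boot all_order all_algebra.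
From mathcomp Require Import all_classical all_reals all_analysis.
From mathcomp Require Import Rstruct Rstruct_topology.
Set Implicit Arguments. Unset Strict Implicit. Unset Printing Implicit Defensive.
Import Order.TTheory GRing.Theory Num.Theory.
Local Open Scope classical_set_scope.
Local Open Scope ring_scope.

Notation R := Rdefinitions.R.

(* an arbitrary base point (needed only to build the Borel measurable structure) *)
HB.instance Definition _ := isPointed.Build 'I_3 (@ord0 2).
Definition alphabet3 := discrete_topology 'I_3.

Definition shift_space := prod_topology (fun _ : nat => alphabet3).

Definition shift (x : shift_space) : shift_space := fun n => x n.+1.

Notation borel_shift := (g_sigma_algebraType (@open shift_space)).

Lemma inv_nat_ge0 (N : nat) : 0 <= (N%:R : R)^-1.
Proof. by rewrite invr_ge0 ler0n. Qed.

Lemma inv_ln_nat_ge0 (N : nat) : 0 <= (ln (N%:R : R))^-1.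
Proof.
rewrite invr_ge0; case: N => [|N]; first by rewrite ln0.
by apply: ln_ge0; rewrite ler1n.
Qed.

(* Emp(x,N) = (1/N) sum_{n=1}^N delta_{S^{n-1} x}  (index k = n-1). *)
Definition Emp (x : shift_space) (N : nat) : {measure set borel_shift -> \bar R} :=
  mscale (NngNum (inv_nat_ge0 N))
    (msum (fun k => @dirac _ borel_shift (iter k shift x) R) N).

(* Emp^log(x,N) = (1/log N) sum_{n=1}^N (1/n) delta_{S^{n-1} x}  (index k = n-1). *)
Definition Emp_log (x : shift_space) (N : nat) : {measure set borel_shift -> \bar R} :=
  mscale (NngNum (inv_ln_nat_ge0 N))
    (msum (fun k => mscale (NngNum (inv_nat_ge0 k.+1))
                      (@dirac _ borel_shift (iter k shift x) R)) N).

Definition weak_star_cvg (mu_ : nat -> {measure set borel_shift -> \bar R})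
    (nu : {measure set borel_shift -> \bar R}) : Prop :=
  forall f : shift_space -> R, continuous f ->
    (fun k => \int[mu_ k]_(y in [set: borel_shift]) f y) @ \oo -->
      \int[nu]_(y in [set: borel_shift]) f y.

Definition V (x : shift_space) : set (probability borel_shift R) :=
  [set nu | exists Nk : nat -> nat,
     [/\ (forall k, (Nk k < Nk k.+1)%N), (1 <= Nk 0)%N &
         weak_star_cvg (fun k => Emp x (Nk k)) nu]].

Definition V_log (x : shift_space) : set (probability borel_shift R) :=
  [set nu | exists Nk : nat -> nat,
     [/\ (forall k, (Nk k < Nk k.+1)%N), (2 <= Nk 0)%N &
         weak_star_cvg (fun k => Emp_log x (Nk k)) nu]].

(* Main.v *)
Require Import Defs.
From HB Require Import structures.
From mathcomp Require Import all_boot all_order all_algebra.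
From mathcomp Require Import all_classical all_reals all_analysis.
From mathcomp Require Import Rstruct Rstruct_topology.
From mathcomp Require Import measurable_realfun ring lra zify.
Set Implicit Arguments. Unset Strict Implicit. Unset Printing Implicit Defensive.
Import Order.TTheory GRing.Theory Num.Theory.
Local Open Scope classical_set_scope.
Local Open Scope ring_scope.
Lemma ln_step (n : nat) : ln (n.+2%:R : R) - ln (n.+1%:R) <= (n.+1%:R)^-1.
Proof.
set y : R := (n.+1%:R)^-1.
have hp : (0 : R) < n.+1%:R by rewrite ltr0n.
have e : (n.+2%:R : R) = n.+1%:R * (1 + y).
  by rewrite mulrDr mulr1 /y divff ?gt_eqF // -natr1.
have y0 : 0 <= y by rewrite /y invr_ge0 ltW.
have hq : (0:R) < 1 + y by rewrite (lt_le_trans ltr01) // lerDl.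
rewrite lerBlDl e lnM ?posrE //.
rewrite lerD2l -[X in _ <= X]expRK ler_ln ?posrE ?expR_gt0 ?expR_ge1Dx //.
Qed.

Lemma harm (A B : nat) : (A <= B)%N ->
  ln (B.+1%:R : R) - ln (A.+1%:R) <= \sum_(A <= k < B) (k.+1%:R)^-1.
Proof.
elim: B => [|B IH].
  by rewrite leqn0 => /eqP ->; rewrite big_geq // subrr.
rewrite leq_eqVlt => /orP[/eqP ->|]; first by rewrite big_geq // subrr.
rewrite ltnS => AB; rewrite big_nat_recr //=.
have := ln_step B; have := IH AB.
move=> h1 h2; apply: le_trans _ (lerD h1 h2).
by rewrite [X in _ <= X]addrC addrA subrK.
Qed.

Definition s (k : nat) : nat := trunc_log 4 k.+1 %% 3.
Definition g (a k : nat) : R := (k.+1%:R)^-1 * (s k == a)%:R.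

Lemma g_ge0 a k : 0 <= g a k.
Proof. by rewrite /g mulr_ge0 ?invr_ge0 ?ler0n. Qed.

Lemma sum_mono a (M N : nat) : (M <= N)%N ->
  \sum_(0 <= k < M) g a k <= \sum_(0 <= k < N) g a k.
Proof.
move=> MN; rewrite (big_cat_nat (leq0n M) MN) /= lerDl.
by apply: sumr_ge0 => k _; exact: g_ge0.
Qed.

Lemma block_sum a i : (a < 3)%N -> (i %% 3 = a)%N ->
  ln 4 <= \sum_(4 ^ i - 1 <= k < 4 ^ i.+1 - 1) g a k.
Proof.
move=> a3 ia.
have p1 : (0 < 4 ^ i)%N by rewrite expn_gt0.
have p2 : (0 < 4 ^ i.+1)%N by rewrite expn_gt0.
have le12 : (4 ^ i - 1 <= 4 ^ i.+1 - 1)%N by rewrite leq_sub2r // leq_exp2l.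
rewrite (eq_big_nat _ _ (F2 := fun k => (k.+1%:R)^-1)); last first.
  move=> k /andP[k1 k2]; rewrite /g (_ : s k = a) ?eqxx ?mulr1 //.
  rewrite /s (@trunc_log_eq _ i) //.
  apply/andP; split; lia.
apply: (le_trans _ (harm le12)).
rewrite !subn1 !prednK // !natrX lnXn ?lnXn ?ltr0n //.
by rewrite -mulrnBr // subSnn.
Qed.

Lemma P_mono e f : (e <= f)%N -> (4 ^ e - 1 <= 4 ^ f - 1)%N.
Proof. by move=> ef; rewrite leq_sub2r // leq_exp2l. Qed.

Lemma sumr_ge0g a m n : 0 <= \sum_(m <= k < n) g a k.
Proof. by apply: sumr_ge0 => k _; exact: g_ge0. Qed.

Lemma log_sum a t : (a < 3)%N ->
  t%:R * ln 4 <= \sum_(0 <= k < 4 ^ (3 * t) - 1) g a k.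
Proof.
move=> a3; elim: t => [|t IH]; first by rewrite mul0r; apply: sumr_ge0g.
have e1 : (3 * t <= 3 * t + a)%N by rewrite leq_addr.
have e2 : (3 * t + a <= (3 * t + a).+1)%N by [].
have e3 : ((3 * t + a).+1 <= 3 * t.+1)%N by rewrite mulnS; lia.
rewrite (big_cat_nat (leq0n _) (P_mono e3)) /=.
rewrite (big_cat_nat (leq0n _) (P_mono e2)) /=.
rewrite (big_cat_nat (leq0n _) (P_mono e1)) /=.
have ha : ((3 * t + a) %% 3 = a)%N by rewrite mulnC modnMDl modn_small.
have hb := @block_sum a (3 * t + a) a3 ha.
have h1 := sumr_ge0g a (4 ^ (3 * t) - 1) (4 ^ (3 * t + a) - 1).
have h3 := sumr_ge0g a (4 ^ (3 * t + a).+1 - 1) (4 ^ (3 * t.+1) - 1).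
rewrite -natr1 mulrDl mul1r.
move: IH hb h1 h3.
move: (\sum_(0 <= k < 4 ^ (3 * t) - 1) g a k) (\sum_(4 ^ (3 * t + a) - 1 <= k < 4 ^ (3 * t + a).+1 - 1) g a k).
move=> A B; move: (\sum_(4 ^ (3 * t) - 1 <= k < 4 ^ (3 * t + a) - 1) g a k).
move=> C; move: (\sum_(4 ^ (3 * t + a).+1 - 1 <= k < 4 ^ (3 * t.+1) - 1) g a k) => D.
lra.
Qed.

Lemma c310 : (0:R) <= 3 / 10. Proof. lra. Qed.
Lemma c14 : (1 / 4 : R) < 3 / 10. Proof. lra. Qed.

Lemma log_bound a N : (a < 3)%N -> (64 ^ 9 <= N)%N ->
  3 / 10 <= (ln (N%:R : R))^-1 * \sum_(0 <= k < N) g a k.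
Proof.
move=> a3 N9.
set t := trunc_log 64 N.
have t9 : (9 <= t)%N by apply: trunc_log_max.
have N0 : (0 < N)%N by apply: leq_trans N9; rewrite expn_gt0.
have h1 : (64 ^ t <= N)%N by apply: trunc_logP.
have h2 : (N < 64 ^ t.+1)%N by apply: trunc_log_ltn.
have e64 : forall u, (64 ^ u = 4 ^ (3 * u))%N by move=> u; rewrite expnM.
have hS : t%:R * ln 4 <= \sum_(0 <= k < N) g a k.
  apply: le_trans (log_sum t a3) _; apply: sum_mono.
  by rewrite -e64; apply: leq_trans h1; rewrite leq_subr.
have L0 : (0 : R) < ln 4 by apply: ln_gt0; rewrite ltr1n.
have hN : ln (N%:R : R) <= (3 * t.+1)%:R * ln 4.
  have -> : (3 * t.+1)%:R * ln 4 = ln ((4 ^ (3 * t.+1))%N%:R : R).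
    by rewrite natrX lnXn ?ltr0n // mulr_natl.
  rewrite ler_ln ?posrE ?ltr0n ?expn_gt0 // ler_nat -e64; exact: ltnW.
have N1 : (1 < N)%N by apply: leq_trans N9.
have lN0 : (0 : R) < ln (N%:R) by apply: ln_gt0; rewrite ltr1n.
rewrite [X in _ <= X]mulrC ler_pdivlMr //.
have t9r : (9 : R) <= t%:R by rewrite ler_nat.
move: hS hN; rewrite natrM -[t.+1%:R]natr1.
move: (\sum_(0 <= k < N) g a k) => S.
have h9 := mulr_ge0 (ltW L0) (elimT idP (etrans (subr_ge0 _ _) t9r)).
move=> hS hN.
have e : 3 / 10 * (3%:R * (t%:R + 1) * ln 4) = t%:R * ln 4 - ln 4 * (t%:R - 9) / 10 :> R.
  by field.
apply: le_trans (_ : 3 / 10 * (3%:R * (t%:R + 1) * ln 4) <= S).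
  apply: ler_wpM2l => //.
rewrite e; apply: le_trans hS; rewrite lerBlDr lerDl.
by apply: mulr_ge0 => //; rewrite invr_ge0 ler0n.
Qed.

Local Open Scope nat_scope.
Lemma count_small N M : 4 * \sum_(k < M) (4 * k.+1 <= N : nat) <= minn (4 * M) N.
Proof.
elim: M => [|M IH]; first by rewrite big_ord0.
rewrite big_ord_recr /=.
move: IH; move: (\sum_(k < M) (4 * k.+1 <= N : nat)) => S IH.
case: (leqP (4 * M.+1) N) => h /=; rewrite ?addn1 ?addn0; lia.
Qed.

Lemma ces_bound N : 0 < N -> exists a : nat, a < 3 /\ 4 * \sum_(k < N) (s k == a : nat) <= N.
Proof.
move=> N0; set j := trunc_log 4 N.
exists (j.+1 %% 3); split; first by rewrite ltn_mod.
apply: leq_trans (leq_trans (count_small N N) (geq_minr _ _)).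
rewrite leq_mul2l /=; apply: leq_sum => k _.
case: eqP => //= /eqP hk; rewrite lt0b.
set t := trunc_log 4 k.+1 in hk.
have tj : t <= j by apply: leq_trunc_log; exact: ltn_ord.
have t2j : t.+2 <= j.
  rewrite /s -/t in hk; move/eqP: hk => hk; lia.
have h1 : k.+1 < 4 ^ t.+1 by apply: trunc_log_ltn.
have h2 : 4 ^ j <= N by apply: trunc_logP.
have h3 : 4 ^ t.+2 <= 4 ^ j by rewrite leq_exp2l.
rewrite expnS in h3; lia.
Qed.


Local Open Scope ring_scope.
Definition fa (a : 'I_3) (y : shift_space) : R := ((y 0%N == a)%:R).

Lemma fa_open (a : 'I_3) (B : set R) : open (fa a @^-1` B).
Proof.
have -> : fa a @^-1` B = (fun y : shift_space => y 0%N) @^-1` [set z : alphabet3 | B ((z == a)%:R)] by [].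
apply: open_comp; last exact: discrete_open.
move=> y _; exact: (@proj_continuous nat (fun _ => alphabet3) 0%N).
Qed.

Lemma fa_meas a : measurable_fun (setT : set borel_shift) (fun y => (fa a y)%:E).
Proof.
move=> _ B mB; rewrite setTI; apply: sub_sigma_algebra.
exact: (fa_open a (EFin @^-1` B)).
Qed.

Lemma fa_ge0 a y : (0 <= fa a y)%R.
Proof. by rewrite /fa ler0n. Qed.

Local Open Scope ereal_scope.
Lemma int_dirac_fa a (z : shift_space) :
  \int[@dirac _ borel_shift z R]_(y in [set: borel_shift]) (fa a y)%:E = (fa a z)%:E.
Proof.
rewrite integral_dirac //; last exact: fa_meas.
by rewrite diracE in_setT mul1e.
Qed.

Lemma int_Emp a x N :
  \int[Emp x N]_(y in [set: borel_shift]) (fa a y)%:E =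
  ((N%:R)^-1 * \sum_(k < N) fa a (iter k Defs.shift x))%R%:E.
Proof.
rewrite /Emp ge0_integral_mscale //; last 2 first.
- exact: fa_meas.
- by move=> y _; rewrite lee_fin fa_ge0.
rewrite ge0_integral_measure_sum //; last 2 first.
- by move=> y _; rewrite lee_fin fa_ge0.
- exact: fa_meas.
under eq_bigr do rewrite int_dirac_fa.
by rewrite sumEFin /= EFinM.
Qed.

Lemma int_Emp_log a x N :
  \int[Emp_log x N]_(y in [set: borel_shift]) (fa a y)%:E =
  ((ln (N%:R))^-1 * \sum_(k < N) (k.+1%:R)^-1 * fa a (iter k Defs.shift x))%R%:E.
Proof.
rewrite /Emp_log ge0_integral_mscale //; last 2 first.
- exact: fa_meas.
- by move=> y _; rewrite lee_fin fa_ge0.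
rewrite ge0_integral_measure_sum //; last 2 first.
- by move=> y _; rewrite lee_fin fa_ge0.
- exact: fa_meas.
rewrite (eq_bigr (fun k : 'I_N => ((k.+1%:R)^-1 * fa a (iter k Defs.shift x))%R%:E)); last first.
  move=> k _; rewrite ge0_integral_mscale //; first by rewrite int_dirac_fa EFinM.
  - exact: fa_meas.
  - by move=> y _; rewrite lee_fin fa_ge0.
by rewrite sumEFin /= EFinM.
Qed.


Local Close Scope ereal_scope.

Lemma fa_cont a : continuous (fa a).
Proof. by apply/continuousP => B _; exact: fa_open. Qed.

Definition xpt : shift_space := fun k => (inord (s k) : 'I_3).

Lemma iter_shift (y : shift_space) k n : iter k Defs.shift y n = y (k + n)%N.
Proof.
elim: k n => [|k IH] n //=.
by rewrite /Defs.shift IH addnS.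
Qed.

Lemma fa_iter (a : 'I_3) k : fa a (iter k Defs.shift xpt) = ((s k == a)%:R).
Proof.
rewrite /fa iter_shift addn0 /xpt -val_eqE /= inordK //.
by rewrite /s ltn_pmod.
Qed.

Lemma incr_ge (Nk : nat -> nat) : (forall k, (Nk k < Nk k.+1)%N) -> forall k, (k <= Nk k)%N.
Proof. by move=> h; elim=> // k IH; apply: leq_ltn_trans IH (h k). Qed.

Lemma ratio_le (n c : nat) : (0 < n)%N -> (4 * c <= n)%N -> (n%:R)^-1 * c%:R <= 1 / 4 :> R.
Proof.
move=> n0 h.
have n0r : (0 : R) < n%:R by rewrite ltr0n.
have hr : ((4 * c)%N%:R <= n%:R :> R) by rewrite ler_nat.
rewrite natrM in hr.
rewrite mulrC ler_pdivrMr //.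
move: hr; move: (c%:R : R) (n%:R : R) => C M; lra.
Qed.

Lemma incr_mono (Nk : nat -> nat) : (forall k, (Nk k < Nk k.+1)%N) -> forall k, (Nk 0 <= Nk k)%N.
Proof. by move=> h; elim=> // k IH; apply: leq_trans IH (ltnW (h k)). Qed.

Theorem proposition4p5 : exists x : shift_space, V x `&` V_log x = set0.
Proof.
exists xpt; apply/seteqP; split; last by move=> ?.
move=> nu [[Nk [incN N1 cN]] [Mk [incM M2 cM]]].
have hC : forall a : 'I_3,
  (fun k => ((Nk k)%:R)^-1 * \sum_(j < Nk k) ((s j == a)%:R)) @ \oo -->
  Rintegral nu [set: borel_shift] (fa a).
  move=> a.
  have -> : (fun k => ((Nk k)%:R)^-1 * \sum_(j < Nk k) ((s j == a)%:R)) =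
    (fun k => Rintegral (Emp xpt (Nk k)) [set: borel_shift] (fa a)).
    apply: funext => k; rewrite /Rintegral int_Emp /=; congr (_ * _).
    by apply: eq_bigr => j _; rewrite fa_iter.
  exact: (cN (fa a) (@fa_cont a)).
have hL : forall a : 'I_3,
  (fun k => (ln (Mk k)%:R)^-1 * \sum_(0 <= j < Mk k) g a j) @ \oo -->
  Rintegral nu [set: borel_shift] (fa a).
  move=> a.
  have -> : (fun k => (ln (Mk k)%:R)^-1 * \sum_(0 <= j < Mk k) g a j) =
    (fun k => Rintegral (Emp_log xpt (Mk k)) [set: borel_shift] (fa a)).
    apply: funext => k; rewrite /Rintegral int_Emp_log big_mkord /=; congr (_ * _).
    by apply: eq_bigr => j _; rewrite fa_iter.
  exact: (cM (fa a) (@fa_cont a)).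
have lb : forall a : 'I_3, 3 / 10 <= Rintegral nu [set: borel_shift] (fa a).
  move=> a; apply: (cvgr_to_ge (hL a)).
  exists (64 ^ 9)%N => // k /= hk; apply: log_bound => //.
  exact: leq_trans hk (incr_ge incM k).
have ev : forall a : 'I_3, \forall k \near \oo,
   (1 / 4 : R) < ((Nk k)%:R)^-1 * \sum_(j < Nk k) ((s j == a)%:R).
  move=> a; exact: (cvgr_gt _ (hC a) _ (lt_le_trans c14 (lb a))).
have [n0 _ H0] := ev ord0.
have [n1 _ H1] := ev (inord 1).
have [n2 _ H2] := ev (inord 2).
set k := (n0 + n1 + n2)%N.
have hk0 : (n0 <= k)%N by rewrite /k -addnA leq_addr.
have hk1 : (n1 <= k)%N by rewrite /k addnAC leq_addl.
have hk2 : (n2 <= k)%N by rewrite /k leq_addl.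
have Nk0 : (0 < Nk k)%N.
  by apply: leq_trans N1 _; apply: incr_mono.
have [b [b3 hb]] := ces_bound Nk0.
have hle : forall a : 'I_3, (a : nat) = b ->
    ((Nk k)%:R)^-1 * \sum_(j < Nk k) ((s j == a)%:R) <= 1 / 4 :> R.
  move=> a ab; rewrite -natr_sum; apply: ratio_le => //.
  by rewrite ab.
have e1 : ((inord 1 : 'I_3) : nat) = 1%N by rewrite inordK.
have e2 : ((inord 2 : 'I_3) : nat) = 2%N by rewrite inordK.
have : (b = 0 \/ b = 1 \/ b = 2)%N by lia.
case=> [eb|[eb|eb]].
- by have := H0 k hk0; rewrite ltNge hle.
- by have := H1 k hk1; rewrite ltNge hle // e1.
- by have := H2 k hk2; rewrite ltNge hle // e2.
Qed.
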